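(* In the setting below, for every $1\le k\le n$ and every $1\le t\le mn+1$, almost surely $$b(k,t)\le c(k,t)\quad\text{or}\quad \sum_{i=1}^{mn}y_i>Y.$$
   Context: Setting: $m,n$ are positive integers with $n\ge 1200\sqrt m$. A deck of $mn$ cards with $m$ copies of each label $1,\dots,n$ is shuffled uniformly at random. A fixed guessing strategy is used: in round $t=1,\dots,mn$ the Guesser guesses $g_t\in\{1,\dots,n\}$, a function (possibly randomized independently of the deck) of $y_1,\dots,y_{t-1}$, where $y_t\in\{0,1\}$ is the indicator that the $t$-th card has label $g_t$. For a vector $v$, $v_{\le t}:=(v_1,\dots,v_t)$. For $1\le k\le n$, $1\le t\le mn+1$: $a(k,t):=|\{1\le i<t: g_i=k\}|$ and $b(k,t):=|\{1\le i<t: g_i=k,\ y_i=1\}|$ (so $b(k,t)\le m$). It is known that, whenever $a(g_t,t)<mn-\sum_{i=1}^{t-1}y_i$, $$\mathbb{E}(y_t\mid g_{\le t},y_{\le t-1})\le \frac{m-b(g_t,t)}{mn-a(g_t,t)-\sum_{i=1}^{t-1}y_i}.$$ Let $Y:=\lfloor \tfrac16\sqrt m\, n\rfloor$. Let $(z_1,\dots,z_{mn})\in\{0,1\}^{mn}$ be a random vector (on an extension of the probability space), with $c(k,t):=|\{1\le i<t: g_i=k,\ z_i=1\}|$, satisfying almost surely: (a) for all $k,t$: $m-\max\{mn-a(k,t)-Y,0\}\le c(k,t)\le m$; (b) for each $t$, conditioned on $g_{\le t},y_{\le t}$, the coordinates of $z_{\le t}$ are mutually independent and independent from $g_{\le mn},y_{\le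 mn}$; (c) for each $t$, if $a(g_t,t)<mn-Y$ then $\mathbb{E}(z_t\mid g_{\le t},z_{\le t-1})=\frac{m-c(g_t,t)}{mn-a(g_t,t)-Y}$; (d) for each $t$, if $\mathbb{E}(y_t\mid g_{\le t},y_{\le t-1})\le\mathbb{E}(z_t\mid g_{\le t},z_{\le t-1})$ then $y_t\le z_t$. (Such a vector exists.) *)

(* Defs.v *)
From HB Require Import structures.
From mathcomp Require Import all_boot all_order all_algebra.
From mathcomp Require Import all_classical all_reals all_analysis.
Set Implicit Arguments. Unset Strict Implicit. Unset Printing Implicit Defensive.
Import Order.TTheory GRing.Theory Num.Theory.
Local Open Scope classical_set_scope.
Local Open Scope ring_scope.

Definition pre (A : Type) (f : nat -> A) (t : nat) : seq A := map f (iota 1 t).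

Definition sumb (f : nat -> bool) (t : nat) : nat := (\sum_(1 <= i < t) f i)%N.

Definition cnt (g : nat -> nat) (k t : nat) : nat := (\sum_(1 <= i < t) (g i == k))%N.

(* b(k,t) (resp. c(k,t)) = |{1 <= i < t : g_i = k, y_i = 1}| *)
Definition cntb (g : nat -> nat) (y : nat -> bool) (k t : nat) : nat :=
  (\sum_(1 <= i < t) ((g i == k) && y i))%N.

Definition base (m n : nat) : seq nat := flatten [seq nseq m k | k <- iota 1 n].

Definition deckseq (T : Type) (m n : nat) (deck : nat -> T -> nat) (w : T) : seq nat :=
  pre (fun t => deck t w) (m * n).

Definition atom (T U : Type) (W : T -> U) (w : T) : set T := [set w' | W w' = W w].

Definition condP (R : realType) (d : measure_display) (T : measurableType d)
  (P : probability T R) (A B : set T) : R :=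
  fine (P (A `&` B)) / fine (P B).

(* E(x_t | g_{<=t}, x_{<=t-1}) for a 0/1 variable x_t, evaluated at w,
   i.e. P(x_t = 1 | (g_{<=t}, x_{<=t-1}) = value at w) *)
Definition condE_past (R : realType) (d : measure_display) (T : measurableType d)
  (P : probability T R) (g : nat -> T -> nat) (x : nat -> T -> bool) (t : nat) (w : T) : R :=
  condP P [set w' | x t w']
    (atom (fun w' => (pre (fun i => g i w') t, pre (fun i => x i w') t.-1)) w).

Definition Ybd (R : realType) (m n : nat) : nat :=
  Num.truncn (Num.sqrt (m%:R : R) * n%:R / 6).

(* Main.v *)
Require Import Defs.
From HB Require Import structures.
From mathcomp Require Import all_boot all_order all_algebra.
From mathcomp Require Import all_classical all_reals all_analysis.
From mathcomp Require Import zify ring lra.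
Import Order.TTheory GRing.Theory Num.Theory.
Local Open Scope classical_set_scope.
Local Open Scope ring_scope.

Lemma sum_mono_nat (F : nat -> nat) t u : (t <= u)%N ->
  (\sum_(1 <= i < t) F i <= \sum_(1 <= i < u) F i)%N.
Proof.
move=> tu; case: (leqP t 1) => t1.
  by rewrite big_geq.
rewrite [X in (_ <= X)%N](@big_cat_nat _ _ _ t) /=; [exact: leq_addr| exact: ltnW| done].
Qed.

Lemma ratio_le (R : realType) (N D1 D2 : R) : 0 <= N -> 0 < D2 -> D2 <= D1 ->
  N / D1 <= N / D2.
Proof.
move=> N0 D20 D21; apply: ler_wpM2l => //.
rewrite lef_pV2 // posrE //; exact: lt_le_trans D21.
Qed.

Lemma det_main (R : realType) (m n Y k : nat) (gw : nat -> nat) (yw zw : nat -> bool)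
  (Ey Ez : nat -> R) :
 (forall t, (1 <= t <= m * n + 1)%N ->
    (m - (m * n - cnt gw k t - Y) <= cntb gw zw k t <= m)%N) ->
 (forall t, (1 <= t <= m * n + 1)%N -> (cntb gw yw k t <= m)%N) ->
 (forall t, (1 <= t <= m * n)%N -> (cnt gw (gw t) t < m * n - sumb yw t)%N ->
    Ey t <= (m%:R - (cntb gw yw (gw t) t)%:R)
       / ((m * n)%:R - (cnt gw (gw t) t)%:R - (sumb yw t)%:R)) ->
 (forall t, (1 <= t <= m * n)%N -> (cnt gw (gw t) t < m * n - Y)%N ->
    Ez t = (m%:R - (cntb gw zw (gw t) t)%:R)
       / ((m * n)%:R - (cnt gw (gw t) t)%:R - Y%:R)) ->
 (forall t, (1 <= t <= m * n)%N -> Ey t <= Ez t -> (yw t <= zw t)%N) ->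
 (sumb yw (m * n + 1) <= Y)%N ->
 forall t, (t <= m * n + 1)%N -> (cntb gw yw k t <= cntb gw zw k t)%N.
Proof.
move=> Ha Hb Hy Hz Hd HY.
elim=> [|t IH] Ht; first by rewrite /cntb !big_geq.
case: (posnP t) => [->|t0]; first by rewrite /cntb !big_geq.
have IH' := IH (ltnW Ht).
have tmn : (1 <= t <= m * n)%N by apply/andP; split; lia.
rewrite /cntb !big_nat_recr //= -/(cntb gw yw k t) -/(cntb gw zw k t).
case: eqP => [gk|_]; last by rewrite !addn0.
case ey: (yw t); rewrite /=; last by rewrite addn0; apply: leq_trans (leq_addr _ _).
rewrite /=; case: (ltnP (cntb gw yw k t) (cntb gw zw k t)) => bc.
  by apply: leq_trans (leq_addr _ _); rewrite addn1.
have bce : cntb gw yw k t = cntb gw zw k t by apply/eqP; rewrite eqn_leq IH' bc.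
case: (ltnP (cnt gw k t) (m * n - Y)) => aY.
  have s_le : (sumb yw t <= Y)%N.
    apply: leq_trans HY; apply: sum_mono_nat; lia.
  have aS : (cnt gw k t < m * n - sumb yw t)%N.
    by apply: (leq_trans aY); apply: leq_sub2l.
  have cm : (cntb gw zw k t <= m)%N.
    by case/andP: (Ha t ltac:(lia)).
  have Hle : Ey t <= Ez t.
    rewrite Hz ?gk //; apply: le_trans (Hy t tmn _) _; first by rewrite gk.
    rewrite gk bce; apply: ratio_le.
    - by rewrite subr_ge0 ler_nat.
    - rewrite -natrB; last by move: aY; rewrite ltn_subRL; lia.
      rewrite -natrB; last by move: aY; rewrite ltn_subRL; lia.
      by rewrite ltr0n; move: aY; rewrite ltn_subRL; lia.
    - by rewrite lerB // ler_nat.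
  have := Hd t tmn Hle; rewrite ey; case: (zw t) => // _; by rewrite bce.
have cm : (m <= cntb gw zw k t)%N.
  move: aY; rewrite leq_subLR => aY.
  have := Ha t ltac:(lia).
  have -> : (m * n - cnt gw k t - Y = 0)%N by lia.
  by rewrite subn0 => /andP[].
have := Hb t.+1 ltac:(lia); rewrite /cntb big_nat_recr //= -/(cntb gw yw k t) gk eqxx ey.
move=> H; apply: leq_trans (leq_addr _ _); exact: leq_trans H cm.
Qed.

Lemma in_bigsetI (T : Type) (r : seq nat) (F : nat -> set T) w :
  (\big[setI/setT]_(i <- r) F i) w <-> (forall i, i \in r -> F i w).
Proof.
elim: r => [|a r IH]; first by rewrite big_nil; split.
rewrite big_cons; split.
  move=> [Fa /IH H] i; rewrite inE => /orP[/eqP->//|]; exact: H.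
move=> H; split; first by apply: H; rewrite inE eqxx.
by apply/IH => i ir; apply: H; rewrite inE ir orbT.
Qed.

Lemma in_bigsetU (T : Type) (r : seq (seq nat)) (F : seq nat -> set T) w :
  (\big[setU/set0]_(i <- r) F i) w <-> (exists i, i \in r /\ F i w).
Proof.
elim: r => [|a r IH]; first by rewrite big_nil; split => // -[i []].
rewrite big_cons; split.
  move=> [Fa|/IH [i [ir Fi]]]; first by exists a; rewrite inE eqxx.
  by exists i; rewrite inE ir orbT.
move=> [i []]; rewrite inE => /orP[/eqP->|ir Fi]; first by left.
by right; apply/IH; exists i.
Qed.

Lemma deck_ae (R : realType) (d : measure_display) (T : measurableType d)
  (P : probability T R) (m n : nat) (deck : nat -> T -> nat) :
  (forall t v, measurable [set w | deck t w = v]) ->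
  P [set w | perm_eq (deckseq m n deck w) (base m n)] = 1%E ->
  {ae P, forall w, perm_eq (deckseq m n deck w) (base m n)}.
Proof.
move=> md HS.
set S := [set w | perm_eq (deckseq m n deck w) (base m n)].
have Seq : S = \big[setU/set0]_(s <- permutations (base m n))
   (if size s == m * n then
      \big[setI/setT]_(i <- iota 0 (m * n)) [set w | deck i.+1 w = nth 0%N s i]
    else set0).
  apply/seteqP; split => w /=.
    move=> Sw; apply/in_bigsetU; exists (deckseq m n deck w).
    rewrite mem_permutations Sw; split => //.
    rewrite /deckseq /pre size_map size_iota eqxx.
    apply/in_bigsetI => i; rewrite mem_iota add0n => /andP[_ im].
    by rewrite (nth_map 0%N) ?size_iota // nth_iota.
  move=> /in_bigsetU [s [sp]]; rewrite /S /=.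
  case: eqP => // ss /in_bigsetI H.
  have -> : deckseq m n deck w = s.
    apply: (@eq_from_nth _ 0%N); first by rewrite /deckseq /pre size_map size_iota.
    move=> i; rewrite /deckseq /pre size_map size_iota => im.
    rewrite (nth_map 0%N) ?size_iota // nth_iota // add1n; apply: H.
    by rewrite mem_iota add0n.
  by rewrite -mem_permutations.
have mS : measurable S.
  rewrite Seq; apply: bigsetU_measurable => s _.
  case: eqP => _ //; apply: bigsetI_measurable => i _; exact: md.
exists (~` S); split.
- exact: measurableC.
- by rewrite probability_setC // HS subee.
- by [].
Qed.

Lemma sum_count (s : seq nat) (p : pred nat) :
  (\sum_(i <- s) (p i : nat) = count p s)%N.
Proof. by elim: s => [|a s IH]; rewrite ?big_nil // big_cons IH. Qed.

Lemma count_base (m n k : nat) : (count (pred1 k) (base m n) <= m)%N.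
Proof.
rewrite /base count_flatten -map_comp.
have -> : forall s : seq nat, sumn [seq (count (pred1 k) \o (fun j => nseq m j)) x | x <- s]
   = (count (pred1 k) s * m)%N.
  by elim=> [|a s IH] //=; rewrite count_nseq IH mulnDl.
have := count_uniq_mem k (iota_uniq 1 n).
by case: (k \in _) => ->; rewrite ?mul1n ?mul0n.
Qed.

Lemma b_le_m (m n k : nat) (deck : nat -> nat) (gw : nat -> nat) (yw : nat -> bool) :
  perm_eq (map deck (iota 1 (m * n))) (base m n) ->
  (forall t, yw t = (deck t == gw t)) ->
  forall t, (t <= m * n + 1)%N -> (cntb gw yw k t <= m)%N.
Proof.
move=> pe Hy t tle.
apply: (@leq_trans (\sum_(1 <= i < t) (deck i == k))%N).
  rewrite /cntb; apply: leq_sum => i _; rewrite Hy.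
  by case: eqP => // ->; case: eqP.
apply: (@leq_trans (\sum_(1 <= i < m * n + 1) (deck i == k))%N).
  case: (leqP t 1) => t1; first by rewrite big_geq.
  rewrite [X in (_ <= X)%N](@big_cat_nat _ _ _ t) /=; [exact: leq_addr| exact: ltnW| done].
apply: leq_trans (count_base m n k).
rewrite -(permP pe) count_map.
rewrite /index_iota addnK -sum_count.
by apply: eq_leq; apply: eq_bigr.
Qed.


Lemma ae_fin (R : realType) (d : measure_display) (T : measurableType d)
  (P : probability T R) (N : nat) (Q : nat -> T -> Prop) :
  (forall t, (1 <= t <= N)%N -> {ae P, forall w, Q t w}) ->
  {ae P, forall w, forall t, (1 <= t <= N)%N -> Q t w}.
Proof.
elim: N => [|N IH] H.
  by apply: nearW => w t; lia.
have h1 := IH (fun t tN => H t ltac:(lia)).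
have h2 := H N.+1 ltac:(lia).
apply: filterS2 h1 h2 => w H1 H2 t tN.
case: (ltnP t N.+1) => tl; first by apply: H1; lia.
by have -> : t = N.+1 by lia.
Qed.


Lemma ae_and {R : realType} {d : measure_display} {T : measurableType d}
  {P : probability T R} {A B : T -> Prop} :
  {ae P, forall w, A w} -> {ae P, forall w, B w} -> {ae P, forall w, A w /\ B w}.
Proof. by move=> HA HB; near=> x; split; [apply: (near HA x) | apply: (near HB x)]. Unshelve. all: by end_near. Qed.

Theorem lemma2p6 (R : realType) (d : measure_display) (T : measurableType d)
  (P : probability T R)
  (d' : measure_display) (Rnd : measurableType d')
  (m n : nat)
  (deck g : nat -> T -> nat) (y z : nat -> T -> bool)
  (rnd : T -> Rnd) (strat : nat -> seq bool -> Rnd -> nat) :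
  (0 < m)%N -> (0 < n)%N ->
  1200 * Num.sqrt (m%:R : R) <= n%:R ->
  (* the deck (card labels deck 1, ..., deck (mn)) is uniformly shuffled *)
  (forall t v, measurable [set w | deck t w = v]) ->
  P [set w | perm_eq (deckseq m n deck w) (base m n)] = 1%E ->
  (forall s1 s2, perm_eq s1 (base m n) -> perm_eq s2 (base m n) ->
     P [set w | deckseq m n deck w = s1] = P [set w | deckseq m n deck w = s2]) ->
  (* the guesser's private randomness is independent of the deck *)
  measurable_fun setT rnd ->
  (forall A, measurable A -> forall s,
     P (rnd @^-1` A `&` [set w | deckseq m n deck w = s])
     = (P (rnd @^-1` A) * P [set w | deckseq m n deck w = s])%E) ->
  (* the guessing strategy *)
  (forall t w, (1 <= t <= m * n)%N ->
     g t w = strat t (pre (fun i => y i w) t.-1) (rnd w)) ->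
  (forall t w, (1 <= t <= m * n)%N -> (1 <= g t w <= n)%N) ->
  (forall t v, measurable [set w | g t w = v]) ->
  (forall t w, y t w = (deck t w == g t w)) ->
  (* the known bound on E(y_t | g_{<=t}, y_{<=t-1}) *)
  (forall t, (1 <= t <= m * n)%N ->
     {ae P, forall w,
       (cnt (fun i => g i w) (g t w) t < m * n - sumb (fun i => y i w) t)%N ->
       condE_past P g y t w
       <= ((m%:R - (cntb (fun i => g i w) (fun i => y i w) (g t w) t)%:R)
           / ((m * n)%:R - (cnt (fun i => g i w) (g t w) t)%:R
              - (sumb (fun i => y i w) t)%:R))}) ->
  (* the random vector z *)
  (forall t v, measurable [set w | z t w = v]) ->
  (* (a) *)
  {ae P, forall w, forall k t, (1 <= k <= n)%N -> (1 <= t <= m * n + 1)%N ->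
     (m - (m * n - cnt (fun i => g i w) k t - Ybd R m n)
        <= cntb (fun i => g i w) (fun i => z i w) k t <= m)%N} ->
  (* (b) *)
  (forall t, (1 <= t <= m * n)%N -> forall w0,
     let Wt := atom (fun w => (pre (fun i => g i w) t, pre (fun i => y i w) t)) w0 in
     (0 < P Wt)%E ->
     forall (e : seq bool) (gy : seq nat * seq bool), size e = t ->
       condP P ([set w | pre (fun i => z i w) t = e]
                `&` [set w | (pre (fun i => g i w) (m * n),
                              pre (fun i => y i w) (m * n)) = gy]) Wt
       = (\prod_(i < t) condP P [set w | z i.+1 w = nth false e i] Wt)
         * condP P [set w | (pre (fun i => g i w) (m * n),
                             pre (fun i => y i w) (m * n)) = gy] Wt) ->
  (* (c) *)
  (forall t, (1 <= t <= m * n)%N ->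
     {ae P, forall w,
       (cnt (fun i => g i w) (g t w) t < m * n - Ybd R m n)%N ->
       condE_past P g z t w
       = (m%:R - (cntb (fun i => g i w) (fun i => z i w) (g t w) t)%:R)
         / ((m * n)%:R - (cnt (fun i => g i w) (g t w) t)%:R - (Ybd R m n)%:R)}) ->
  (* (d) *)
  (forall t, (1 <= t <= m * n)%N ->
     {ae P, forall w,
       condE_past P g y t w <= condE_past P g z t w -> (y t w <= z t w)%N}) ->
  (* conclusion *)
  forall k t, (1 <= k <= n)%N -> (1 <= t <= m * n + 1)%N ->
    {ae P, forall w,
      (cntb (fun i => g i w) (fun i => y i w) k t
         <= cntb (fun i => g i w) (fun i => z i w) k t)%N
      \/ (Ybd R m n < sumb (fun i => y i w) (m * n + 1))%N}.

Proof.
move=> m0 n0 Hmn mdeck HS Hunif mrnd Hind Hg Hgr mg Hy Hbound mz Ha Hb Hc Hd k t kn tr.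
have Hdeck := @deck_ae _ _ _ P m n deck mdeck HS.
have HB := @ae_fin _ _ _ P (m * n) _ Hbound.
have HC := @ae_fin _ _ _ P (m * n) _ Hc.
have HD := @ae_fin _ _ _ P (m * n) _ Hd.
have Hall := ae_and (ae_and Hdeck Ha) (ae_and HB (ae_and HC HD)).
move: Hall; apply: filterS => w /= [[pe Haw] [HBw [HCw HDw]]].
case: (leqP (sumb (fun i => y i w) (m * n + 1)) (Ybd R m n)) => HY; last by right.
left.
apply: (@det_main R m n (Ybd R m n) k (fun i => g i w) (fun i => y i w)
  (fun i => z i w) (fun t => condE_past P g y t w) (fun t => condE_past P g z t w)) => //.
all: try by case/andP: tr.
all: try by move=> t' t'r; apply: Haw.
all: try by apply: (@b_le_m m n k (fun i => deck i w) (fun i => g i w) (fun i => y i w)).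
move=> t1 /andP[_ t1r]; apply: (@b_le_m m n k (fun i => deck i w) (fun i => g i w) (fun i => y i w)) => //.
Qed.
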